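(* Let $T$ be a hyper-recurrent operator on a Fréchet space $X$. Then for every positive integer $m$, both $T^m$ (acting on $X$) and $T_m=T\oplus\cdots\oplus T$ ($m$ copies, acting on $X^m$) are hyper-recurrent.
   Context: For a continuous linear operator $T$ on a Fréchet space $X$: $x$ is recurrent if $T^{\omega_n}x\to x$ for some strictly increasing sequence $(\omega_n)$ of positive integers; $\mathrm{Rec}(T)$ is the set of recurrent vectors. $\mathfrak{C}$ is the set of strictly increasing sequences $\omega=(\omega_n)$ of positive integers such that $T^{\omega_n}x\to x$ for some $x\neq 0$; $\mathfrak{L}(\omega)=\{x:T^{\omega_n}x\to x\}$. A vector $x\in\mathrm{Rec}(T)$ is hyper-recurrent if for every $\omega\in\mathfrak{C}$ with $x\in\mathfrak{L}(\omega)$, $\mathfrak{L}(\omega)$ is dense in $X$; $\mathrm{Hr}(T)$ denotes the set of hyper-recurrent vectors, and $T$ is hyper-recurrent if $T$ is recurrent (i.e. $\mathrm{Rec}(T)$ is dense) and $\mathrm{Hr}(T)\neq\emptyset$. *)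

(* Defs.v *)
From HB Require Import structures.
From mathcomp Require Import all_boot all_order all_algebra.
From mathcomp Require Import all_classical all_reals all_analysis.
Set Implicit Arguments. Unset Strict Implicit. Unset Printing Implicit Defensive.
Import Order.TTheory GRing.Theory Num.Theory.
Local Open Scope classical_set_scope.
Local Open Scope ring_scope.

(* A Fréchet space: a (locally convex, as built into [tvsType]) topological
   vector space that is Hausdorff, metrizable (0 has a countable
   neighbourhood base) and complete.  For metrizable tvs, completeness is
   sequential completeness w.r.t. the translation-invariant uniformity. *)
Definition frechet (K : numFieldType) (X : tvsType K) : Prop :=
  [/\ hausdorff_space X,
      (exists B : nat -> set X,
          (forall n, nbhs (0 : X) (B n)) /\
          (forall U, nbhs (0 : X) U -> exists n, B n `<=` U)) &
      (forall u : nat -> X,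
          (forall U, nbhs (0 : X) U ->
             exists N, forall n k, (N <= n)%N -> (N <= k)%N -> U (u n - u k)) ->
          exists l : X, u @ \oo --> l)].

Section Recurrence.
Variable X : PreTopologicalNmodule.type.
Variable T : X -> X.

Definition pos_incr (w : nat -> nat) : Prop :=
  (0 < w 0)%N /\ forall n, (w n < w n.+1)%N.

Definition Lset (w : nat -> nat) : set X :=
  [set x | (fun n => iter (w n) T x) @ \oo --> x].

Definition Cset : set (nat -> nat) :=
  [set w | pos_incr w /\ exists2 x, x <> 0 & Lset w x].

Definition Rec : set X :=
  [set x | exists2 w, pos_incr w & Lset w x].

Definition Hr : set X :=
  [set x | Rec x /\ forall w, Cset w -> Lset w x -> dense (Lset w)].

Definition hyper_recurrent : Prop := dense Rec /\ Hr !=set0.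
End Recurrence.

(* Make [X^m] (row vectors 'rV[X]_m, product topology) a topological Nmodule. *)
HB.instance Definition _ (X : PreTopologicalNmodule.type) (m n : nat) :=
  Topological.on 'M[X]_(m, n).

(* Main.v *)
Require Import Defs.
From HB Require Import structures.
From mathcomp Require Import all_boot all_order all_algebra.
From mathcomp Require Import all_classical all_reals all_analysis.
Set Implicit Arguments. Unset Strict Implicit. Unset Printing Implicit Defensive.
Import Order.TTheory GRing.Theory Num.Theory.
Local Open Scope classical_set_scope.
Local Open Scope ring_scope.

Section Aux.
Variables (K : numFieldType) (X : tvsType K) (T : {linear X -> X}).
Hypothesis Tc : continuous T.

Definition Ret (x : X) (S : nat -> Prop) :=
  forall U, nbhs x U -> forall N, exists n, (N <= n)%N /\ S n /\ U (iter n T x).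

Lemma iter_cont n : continuous (iter n T).
Proof.
elim: n => [|n IH] x.
  have -> : iter 0 T = id by [].
  exact: cvg_id.
have -> : iter n.+1 T = T \o iter n T by apply: funext => y; rewrite iterS.
apply: continuous_comp; [exact: IH | exact: Tc].
Qed.

Lemma Ret_add x S1 S2 : Ret x S1 -> Ret x S2 ->
  Ret x (fun n => exists u v, [/\ S1 u, S2 v & n = (u + v)%N]).
Proof.
move=> R1 R2 U xU N.
rewrite nbhsE /= in xU; case: xU => O xO OU.
have [b [Nb [S2b Ob]]] := R2 O (open_nbhs_nbhs xO) N.
have Ob' : nbhs (iter b T x) O.
  by case: xO => oO _; apply: open_nbhs_nbhs; split.
have W : nbhs x (iter b T @^-1` O) := iter_cont Ob'.
have [a [_ [S1a Wa]]] := R1 _ W 0%N.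
exists (b + a)%N; split; first exact: leq_trans Nb (leq_addr _ _).
split; first by exists a, b; split => //; rewrite addnC.
by apply: OU; rewrite iterD.
Qed.

Lemma Ret_mono x (S1 S2 : nat -> Prop) : (forall n, S1 n -> S2 n) -> Ret x S1 -> Ret x S2.
Proof.
move=> h R U xU N; have [n [? [? ?]]] := R U xU N; exists n; split => //; split => //.
exact: h.
Qed.


Lemma notRet x S : ~ Ret x S -> exists U, nbhs x U /\ exists N, forall n, (N <= n)%N -> S n -> ~ U (iter n T x).
Proof.
move=> nR; apply: contrapT => H; apply: nR => U xU N.
apply: contrapT => H2; apply: H; exists U; split => //; exists N => n Nn Sn Un.
by apply: H2; exists n.
Qed.

Lemma Ret_residue x m : (0 < m)%N -> Ret x (fun=> True) ->
  exists r, Ret x (fun n => n %% m = r %% m)%N.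
Proof.
move=> m0 R; apply: contrapT => nE.
have P : forall k, (k <= m)%N -> exists U, nbhs x U /\ exists N, forall n, (N <= n)%N -> U (iter n T x) -> (k <= n %% m)%N.
  elim=> [|k IH] km.
    by exists setT; split; [exact: filterT | exists 0%N].
  have [U [xU [N HN]]] := IH (ltnW km).
  have nRk : ~ Ret x (fun n => n %% m = k %% m)%N by move=> h; apply: nE; exists k.
  have [V [xV [M HM]]] := notRet nRk.
  exists (U `&` V); split; first exact: filterI.
  exists (maxn N M) => n; rewrite geq_max => /andP[Nn Mn] [Un Vn].
  rewrite ltn_neqAle HN // andbT.
  apply/eqP => e; apply: (HM n Mn _ Vn).
  by rewrite e modn_mod.
have [U [xU [N HN]]] := P m (leqnn m).
have [n [Nn [_ Un]]] := R U xU N.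
by have := HN n Nn Un; rewrite leqNgt ltn_pmod.
Qed.

Lemma Ret_mult x m r : Ret x (fun n => n %% m = r %% m)%N ->
  forall k, Ret x (fun n => n %% m = (r * k.+1) %% m)%N.
Proof.
move=> R; elim=> [|k IH]; first by rewrite muln1.
apply: Ret_mono (Ret_add IH R) => n [u [v [eu ev ->]]].
by rewrite -modnDm eu ev modnDm addnC -mulnS.
Qed.

Lemma Ret_seq x (S : nat -> Prop) (B : nat -> set X) :
  (forall n, nbhs (0:X) (B n)) -> (forall U, nbhs (0:X) U -> exists n, B n `<=` U) ->
  Ret x S -> exists w, pos_incr w /\ (forall k, S (w k)) /\ Lset T w x.
Proof.
move=> B0 Bb R.
pose D := fix D k := if k is k'.+1 then D k' `&` B k else B 0%N.
have D0 : forall k, nbhs (0:X) (D k) by elim => [|k IH] /=; [exact: B0 | exact: filterI].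
have Dd : forall j k, (j <= k)%N -> D k `<=` B j.
  move=> j; elim => [|k IH]; first by rewrite leqn0 => /eqP ->.
  by rewrite leq_eqVlt => /orP [/eqP -> | jk] y /= [Dy By] //; exact: IH.
have /choice [g Hg] : forall kN : nat * nat, exists n, (kN.2 <= n)%N /\ S n /\ [set x + y | y in D kN.1] (iter n T x).
  by move=> [k N]; apply: R; exact: nbhsT.
pose w := fix w k := if k is k'.+1 then g (k, (w k').+1) else g (0, 1)%N.
  have Hw : forall k, [/\ ((if k is k'.+1 then (w k').+1 else 1) <= w k)%N, S (w k) &
    [set x + y | y in D k] (iter (w k) T x)].
  by case => [|k] /=; [have [? []] := Hg (0,1)%N | have [? []] := Hg (k.+1, (w k).+1)].
exists w; split; [split|split].
- by have [] := Hw 0%N.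
- by move=> n; have [] := Hw n.+1.
- by move=> k; have [] := Hw k.
- move=> U /= xU.
  have := nbhsB (-x) xU; rewrite addNr => /Bb [j Bj].
  exists j => // k /= jk.
  have [_ _ [y Dy <-]] := Hw k.
  have [u Uu e] := Bj _ (Dd _ _ jk _ Dy).
  by rewrite -e addrA subrr add0r.
Qed.

End Aux.

Lemma iter_iter (A : Type) (f : A -> A) a b x : iter a (iter b f) x = iter (b * a) f x.
Proof. by elim: a => [|a IH]; rewrite ?muln0 // iterS IH mulnS iterD. Qed.

Lemma iter_f0 (Y : PreTopologicalNmodule.type) (f : Y -> Y) n : f 0 = 0 -> iter n f 0 = 0.
Proof. by move=> f0; elim: n => [|n IH] //; rewrite iterS IH. Qed.

Lemma Lset0 (Y : PreTopologicalNmodule.type) (f : Y -> Y) w : f 0 = 0 -> Lset f w 0.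
Proof.
move=> f0; rewrite /Lset /=.
have -> : (fun n => iter (w n) f 0) = fun=> 0 by apply: funext => n; exact: iter_f0.
exact: cvg_cst.
Qed.

Lemma dense_mono (Y : topologicalType) (A B : set Y) : A `<=` B -> dense A -> dense B.
Proof. move=> AB dA O O0 oO; have [y [Oy Ay]] := dA O O0 oO; exists y; split => //; exact: AB. Qed.

Lemma pos_incr_mul m w : (0 < m)%N -> pos_incr w -> pos_incr (fun n => m * w n)%N.
Proof.
move=> m0 [w0 wi]; split; first by rewrite muln_gt0 m0.
by move=> n; rewrite ltn_pmul2l.
Qed.

Lemma pos_incr_ge w : pos_incr w -> forall k, (k <= w k)%N.
Proof. by move=> [_ wi]; elim => [|k IH] //; exact: leq_ltn_trans IH (wi k). Qed.

Lemma Lset_iterE (Y : PreTopologicalNmodule.type) (f : Y -> Y) m w :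
  Lset (iter m f) w = Lset f (fun n => m * w n)%N.
Proof.
apply/seteqP; split => y; rewrite /Lset /=;
have -> : (fun n => iter (w n) (iter m f) y) = (fun n => iter (m * w n) f y)
  by apply: funext => n; rewrite iter_iter.
all: by [].
Qed.

Lemma iter_map (Y : Type) (f : Y -> Y) p q n (v : 'M[Y]_(p, q)) :
  iter n (map_mx f) v = map_mx (iter n f) v.
Proof.
elim: n => [|n IH]; first by apply/matrixP => i j; rewrite mxE.
by rewrite iterS IH; apply/matrixP => i j; rewrite !mxE iterS.
Qed.

Lemma mx_cvg (Y : PreTopologicalNmodule.type) p q (f : nat -> 'M[Y]_(p, q)) (M : 'M[Y]_(p, q)) :
  f @ \oo --> M <-> forall i j, (fun n => f n i j) @ \oo --> M i j.
Proof.
split.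
  move=> h i j U /= MU; apply: (h [set N | U (N i j)]).
  exists (fun i' j' => if (i' == i) && (j' == j) then U else setT).
    by move=> i' j'; case: ifP => [/andP[/eqP-> /eqP->]|_] //; exact: filterT.
  by move=> N /(_ i j); rewrite !eqxx.
move=> h A [P HP sub].
have H : \forall n \near \oo, forall i j, P i j (f n i j).
  apply: filter_forall => i; apply: filter_forall => j; exact: h i j _ (HP i j).
by apply: filterS H => n Pn; apply: sub.
Qed.

Lemma mx_dense (Y : PreTopologicalNmodule.type) p q (D : set Y) :
  dense D -> dense [set M : 'M[Y]_(p, q) | forall i j, D (M i j)].
Proof.
move=> dD O [M0 OM0] oO.
have := open_nbhs_nbhs (conj oO OM0) => -[P HP sub].
have /choice [g Hg] : forall ij : 'I_p * 'I_q, exists y, P ij.1 ij.2 y /\ D y.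
  move=> [i j] /=; have := HP i j; rewrite nbhsE => -[Q [oQ Qm] QP].
  have [y [Qy Dy]] := dD Q (ex_intro _ _ Qm) oQ.
  by exists y; split => //; exact: QP.
exists (\matrix_(i, j) g (i, j)); split.
  by apply: sub => i j; rewrite mxE; exact: (Hg (i, j)).1.
by move=> i j; rewrite mxE; exact: (Hg (i, j)).2.
Qed.

Lemma Lset_mx (Y : PreTopologicalNmodule.type) (f : Y -> Y) p q w (v : 'M[Y]_(p, q)) :
  Lset (map_mx f) w v <-> forall i j, Lset f w (v i j).
Proof.
rewrite /Lset /=.
have -> : (fun n => iter (w n) (map_mx f) v) = (fun n => map_mx (iter (w n) f) v)
  by apply: funext => n; rewrite iter_map.
rewrite mx_cvg; split => h i j; have := h i j;
have -> // : (fun n => map_mx (iter (w n) f) v i j) = (fun n => iter (w n) f (v i j))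
  by apply: funext => n; rewrite mxE.
Qed.

Unset Implicit Arguments.

Theorem proposition4p10 (K : numFieldType) (X : tvsType K)
  (T : {linear X -> X}) :
  frechet X -> continuous T -> hyper_recurrent T ->
  forall m : nat, (0 < m)%N ->
    hyper_recurrent (iter m T) /\
    hyper_recurrent (fun v : 'rV[X]_m => map_mx T v).
Proof.
move=> [hX [B [B0 Bb]] _] Tc [dRec [x0 [[w0 pw0 Lx0] Hx0]]] m m0.
have T0 : T 0 = 0 by exact: linear0.
have KL : forall y, Rec T y -> exists w, pos_incr w /\ Lset T (fun n => m * w n)%N y.
  move=> y [w pw Ly].
  have R : Ret T y (fun=> True).
    move=> U yU N; have [N0 _ HN0] := Ly U yU.
    exists (w (maxn N N0)); split; last split => //.
      exact: leq_trans (leq_maxl N N0) (pos_incr_ge pw _).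
    exact: (HN0 (maxn N N0) (leq_maxr N N0)).
  have [r Rr] := Ret_residue m0 R.
  have := Ret_mult Tc Rr m.-1; rewrite prednK // modnMl => R0.
  have [s [ps [Ss Ls]]] := Ret_seq B0 Bb R0.
  have ds : forall n, (m %| s n)%N by move=> n; rewrite /dvdn Ss.
  exists (fun n => s n %/ m)%N; split; first split.
  - rewrite divn_gt0 //; apply: dvdn_leq (ds 0%N); by case: ps.
  - by move=> n; rewrite -(ltn_pmul2r m0) !divnK //; case: ps.
  - have -> : (fun n => m * (s n %/ m))%N = s by apply: funext => n; rewrite mulnC divnK.
    exact: Ls.
split.
  split.
    case: (pselect (exists y, Rec T y /\ y <> 0 /\ (x0 = y \/ x0 = 0))).
      move=> [y [Ry [y0 hx]]]; have [w [pw Lw]] := KL y Ry.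
      have pmw := pos_incr_mul m0 pw.
      have Lx : Lset T (fun n => m * w n)%N x0 by case: hx => ->; [|exact: Lset0].
      have dL := Hx0 _ (conj pmw (ex_intro2 _ _ y y0 Lw)) Lx.
      apply: dense_mono dL => z Lz; exists w => //; by rewrite Lset_iterE.
    move=> nE.
    have x00 : x0 = 0.
      by apply: contrapT => h; apply: nE; exists x0; split; [exists w0 | split; [|left]].
    have Rsub : Rec T `<=` [set 0].
      move=> y Ry; apply: contrapT => y0; apply: nE; exists y; split => //; split => //; by right.
    apply: dense_mono dRec => y /Rsub ->.
    exists (fun n => n.+1); first by split.
    by apply: Lset0; exact: iter_f0.
  exists x0; split.
    have [w [pw Lw]] := KL x0 (ex_intro2 _ _ w0 pw0 Lx0).
    by exists w => //; rewrite Lset_iterE.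
  move=> w [pw [y y0 Ly]] Lx.
  rewrite Lset_iterE in Ly Lx *.
  exact: Hx0 _ (conj (pos_incr_mul m0 pw) (ex_intro2 _ _ y y0 Ly)) Lx.
split.
  have [w [pw dw]] : exists w, pos_incr w /\ dense (Lset T w).
    case: (pselect (exists y, Rec T y /\ y <> 0 /\ (x0 = y \/ x0 = 0))).
      move=> [y [[w pw Lw] [y0 hx]]].
      have Lx : Lset T w x0 by case: hx => ->; [|exact: Lset0].
      by exists w; split => //; exact: Hx0 w (conj pw (ex_intro2 _ _ y y0 Lw)) Lx.
    move=> nE.
    have x00 : x0 = 0.
      by apply: contrapT => h; apply: nE; exists x0; split; [exists w0 | split; [|left]].
    have Rsub : Rec T `<=` [set 0].
      move=> y Ry; apply: contrapT => y0; apply: nE; exists y; split => //; split => //; by right.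
    exists (fun n => n.+1); split; first by split.
    apply: dense_mono dRec => y /Rsub ->; exact: Lset0.
  apply: dense_mono (mx_dense dw) => M HM; exists w => //; exact/Lset_mx.
exists (const_mx x0); split.
  by exists w0 => //; apply/Lset_mx => i j; rewrite mxE.
move=> w [pw [v v0 Lv]] Lx.
have [i [j vij]] : exists i j, v i j <> 0.
  apply: contrapT => h; apply: v0; apply/matrixP => i j; rewrite !mxE.
  by apply: contrapT => hij; apply: h; exists i, j.
have Cw : Cset T w := conj pw (ex_intro2 _ _ (v i j) vij ((proj1 (Lset_mx _ _ _) Lv) i j)).
have Lxx : Lset T w x0 by have := (proj1 (Lset_mx _ _ _) Lx) 0 (Ordinal m0); rewrite mxE.
have dL := Hx0 w Cw Lxx.
apply: dense_mono (mx_dense dL) => M HM; exact/Lset_mx.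
Qed.
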